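(* Let $R$ be a $*$-ring, let $a\in R$, and let $n\geq 3$ be an integer. Then $a$ is core invertible if and only if there exists $b\in R$ such that ${}^{\circ}a=Rb$ and $u=a^{*}a^{n}+b^{*}b$ is invertible. In this case $$a^{\mathrm{core}}=a^{n-1}u^{-1}a^{*}.$$
   Context: A $*$-ring is an associative ring with identity $1$ and an involution $*$, i.e. $(a^* )^*=a$, $(ab)^*=b^*a^*$ and $(a+b)^*=a^*+b^*$. For $a\in R$: ${}^{\circ}a=\{x\in R : xa=0\}$ and $Rb=\{xb : x\in R\}$. An element $a$ is core invertible if there is $x\in R$ with $(ax)^*=ax$, $ax^2=x$ and $xa^2=a$. Such an $x$ is unique and denoted $a^{\mathrm{core}}$. ''Invertible'' means having a two-sided inverse in $R$. *)

(* Defs.v *)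
From HB Require Import structures.
From mathcomp Require Import all_boot all_order all_algebra.
Set Implicit Arguments. Unset Strict Implicit. Unset Printing Implicit Defensive.
Import GRing.Theory.
Local Open Scope ring_scope.

Definition involution (R : pzRingType) (star : R -> R) : Prop :=
  [/\ forall a, star (star a) = a,
      forall a b, star (a * b) = star b * star a
    & forall a b, star (a + b) = star a + star b].

Definition is_core_inverse (R : pzRingType) (star : R -> R) (a x : R) : Prop :=
  [/\ star (a * x) = a * x, a * x ^+ 2 = x & x * a ^+ 2 = a].

Definition core_invertible (R : pzRingType) (star : R -> R) (a : R) : Prop :=
  exists x, is_core_inverse star a x.

Definition is_inverse (R : pzRingType) (u v : R) : Prop := u * v = 1 /\ v * u = 1.
Definition invertible (R : pzRingType) (u : R) : Prop := exists v, is_inverse u v.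

Definition lann (R : pzRingType) (a : R) : R -> Prop := fun x => x * a = 0.
Definition lprincipal (R : pzRingType) (b : R) : R -> Prop := fun y => exists x, y = x * b.

(* Main.v *)
Require Import Defs.
From HB Require Import structures.
From mathcomp Require Import all_boot all_order all_algebra.
Import GRing.Theory.
Local Open Scope ring_scope.

Lemma star_basic (R : pzRingType) (s : R -> R) : involution s ->
  [/\ s 1 = 1, s 0 = 0, forall x, s (- x) = - s x & forall x y, s (x - y) = s x - s y].
Proof.
case=> ss sM sD.
have s1 : s 1 = 1 by have := sM 1 (s 1); rewrite mul1r ss mul1r.
have s0 : s 0 = 0.
  have := sD 0 0; rewrite addr0 => h.
  by apply: (addrI (s 0)); rewrite addr0 -h.
have sN : forall x, s (- x) = - s x.
  move=> x; apply: (addrI (s x)); rewrite -sD !subrr; exact: s0.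
split=> // x y; by rewrite sD sN.
Qed.
Arguments star_basic {R s}.


Lemma conv (R : pzRingType) (s : R -> R) (a b u v P M N : R) :
  involution s -> b * a = 0 -> M = a * (a * P) -> N = a * M -> N * a = M * a * a ->
  u = s a * N + s b * b ->
  u * v = 1 -> v * u = 1 ->
  is_core_inverse s a (M * v * s a).
Proof.
move=> inv ba hM hN hNa hu uv vu; have [s1 s0 sN sB] := star_basic inv.
case: inv => ss sM sD.
have su : s u = s N * a + s b * b by rewrite hu sD !sM !ss.
have sNa : s N * a = s u - s b * b by rewrite su addrK.
have svu : s v * s u = 1 by rewrite -sM uv s1.
have bM : b * M = 0 by rewrite hM mulrA ba mul0r.
have [e he] : exists e, e = N * v * s a by eexists.
have se : s e = a * s v * s N by rewrite he !sM ss mulrA.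
have K1 : s N * N = s u * M.
  by rewrite {2}hN mulrA su mulrDl -(mulrA (s b)) bM mulr0 addr0.
have ee : s e * e = e.
  rewrite se he -!mulrA (mulrA (s N)) K1.
  by rewrite !mulrA -(mulrA a) svu mulr1 -hN.
have eh : s e = e by rewrite -ee sM ss ee.
have ea2 : e * a * a = a * a.
  rewrite -{1}eh se -!mulrA (mulrA (s N) a a) sNa mulrBl -(mulrA (s b)) ba mulr0 subr0.
  by rewrite !mulrA -(mulrA a) svu mulr1.
have vua : v * s a * (N * a) = a.
  rewrite -{3}(mul1r a) -vu hu -(mulrA v (_ + _)) mulrDl mulrDr -(mulrA (s b)) ba mulr0 mulr0 addr0.
  by rewrite !mulrA.
have ax : a * (M * v * s a) = e by rewrite he hN !mulrA.
split.
- by rewrite ax eh.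
- by rewrite expr2 mulrA ax hM !mulrA ea2.
- rewrite expr2 mulrA.
  set t := a * P * v * s a * a * a - 1.
  have key : M * v * s a * a * a - a = a * t by rewrite /t mulrBr mulr1 hM !mulrA.
  have at0 : a * (a * t) = 0.
    rewrite -key mulrBr.
    have -> : a * (M * v * s a * a * a) = a * (M * v * s a) * a * a by rewrite !mulrA.
    by rewrite ax ea2 subrr.
  have at1 : a * t = 0 by rewrite -{1}vua hNa -!mulrA at0 !mulr0.
  by apply/eqP; rewrite -subr_eq0 key at1.
Qed.
Arguments conv {R s a b u v P M N}.


Lemma core_basic (R : pzRingType) (s : R -> R) (a x : R) :
  is_core_inverse s a x ->
  [/\ s (a * x) = a * x, a * (x * x) = x, x * (a * a) = a,
      a * x * a = a & x * a * x = x].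
Proof.
case; rewrite !expr2 => H1 H2 H3; split => //.
- by rewrite -{2}H3 mulrA -(mulrA a x x) H2 H3.
- by rewrite -{2}H2 !mulrA -(mulrA x a a) H3 -mulrA H2.
Qed.
Arguments core_basic {R s a x}.


Lemma uniq_core (R : pzRingType) (s : R -> R) (a b u v x A1 X1 X0 : R) :
  involution s -> b * a = 0 -> is_core_inverse s a x ->
  A1 * X1 = a * x -> X1 = x * X0 ->
  u = s a * (a * A1) + s b * b -> v * u = 1 ->
  x = A1 * v * s a.
Proof.
move=> inv ba cx hA hX hu vu; have [s1 s0 sN sB] := star_basic inv.
case: inv => ss sM sD.
have [H1 H2 H3 axa xax] := core_basic cx.
have bx : b * x = 0 by rewrite -H2 mulrA ba mul0r.
have sap : s a * (a * x) = s a by rewrite -{1}H1 -sM axa.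
have key : u * (X1 * x * s x) = s (x * a).
  rewrite hu mulrDl hX -!mulrA (mulrA b) bx mul0r !mulr0 addr0.
  rewrite !mulrA -(mulrA (s a * a * A1) x X0) -hX -(mulrA (s a * a) A1 X1) hA !mulrA.
  by rewrite -(mulrA (s a * a * a) x x) -(mulrA (s a * a) a (x * x)) H2 -(mulrA (s a) a x) sap sM.
have k2 : X1 * x * s x = v * s (x * a) by rewrite -key mulrA vu mul1r.
have sxa : s (x * a) * s a = s a by rewrite -sM mulrA axa.
rewrite -{1}sxa mulrA -(mulrA A1 v (s (x * a))) -k2 !mulrA hA -(mulrA (a * x * x)) -sM H1.
by rewrite -(mulrA a x x) H2 mulrA xax.
Qed.
Arguments uniq_core {R s a b u v x A1 X1 X0}.


Lemma omulL (R : pzRingType) (y z : R) : y * z = y -> (1 - y) * (1 - z) = 1 - z.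
Proof. by move=> h; rewrite mulrBl mul1r mulrBr mulr1 h subrr subr0. Qed.

Lemma omulR (R : pzRingType) (y z : R) : y * z = z -> (1 - y) * (1 - z) = 1 - y.
Proof. by move=> h; rewrite mulrBl mul1r mulrBr mulr1 h opprB addrA subrK. Qed.

Lemma fwd (R : pzRingType) (s : R -> R) (a x N N1 N0 X X0 u v b : R) :
  involution s -> is_core_inverse s a x ->
  N = a * N1 -> N = N0 * a -> X = x * X0 -> N * X = a * x -> X * N = x * a ->
  b = 1 - a * x -> u = s a * N + s b * b ->
  v = X * s x + (1 - x * a) * (1 - s (x * a)) ->
  (forall y, lann a y <-> lprincipal b y) /\ is_inverse u v.
Proof.
move=> inv cx hN1 hN0 hX hNX hXN hb hu hv; have [s1 s0 sN sB] := star_basic inv.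
case: inv => ss sM sD.
have [H1 H2 H3 axa xax] := core_basic cx.
have pp : a * x * (a * x) = a * x by rewrite mulrA axa.
have px : a * x * x = x by rewrite -mulrA H2.
have sb : s b = b by rewrite hb sB s1 H1.
have bb : s b * b = b by rewrite sb hb omulL.
have sap : s a * (a * x) = s a by rewrite -{1}H1 -sM axa.
have sxp : s x * (a * x) = s x by rewrite -{1}H1 -sM px.
have sqsa : s (x * a) * s a = s a by rewrite -sM mulrA axa.
have pq : a * x * (x * a) = x * a by rewrite mulrA px.
have qp : x * a * (a * x) = a * x by rewrite mulrA -(mulrA x a a) H3.
have psq : a * x * s (x * a) = a * x by rewrite -{1}H1 -sM qp H1.
have sqp : s (x * a) * (a * x) = s (x * a) by rewrite -{1}H1 -sM pq.
have Nq : N * (x * a) = N by rewrite hN0 -mulrA (mulrA a) axa.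
have pN : a * x * N = N by rewrite hN1 mulrA axa.
have bX : b * X = 0 by rewrite hb hX mulrBl mul1r mulrA px subrr.
have sxb : s x * b = 0 by rewrite hb mulrBr mulr1 sxp subrr.
have Nb : N * (1 - x * a) = 0 by rewrite mulrBr mulr1 Nq subrr.
have sqa : (1 - s (x * a)) * s a = 0 by rewrite mulrBl mul1r sqsa subrr.
have sasx : s a * s x = s (x * a) by rewrite sM.
have sxsa : s x * s a = a * x by rewrite -sM H1.
split.
  move=> y; split.
  - rewrite /lann /lprincipal => ya; exists y.
    by rewrite hb mulrBr mulr1 mulrA ya mul0r subr0.
  - rewrite /lann /lprincipal => [[z ->]].
    by rewrite hb -mulrA mulrBl mul1r axa subrr mulr0.
rewrite hu hv bb; set V2 := (1 - x * a) * (1 - s (x * a)); split.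
- rewrite mulrDl !mulrDr.
  rewrite -(mulrA (s a) N) (mulrA N X) hNX (mulrA (s a) (a * x)) sap sasx.
  rewrite /V2 -(mulrA (s a) N) (mulrA N) Nb mul0r mulr0 addr0.
  rewrite mulrA bX mul0r add0r.
  rewrite hb mulrA omulR // omulL //.
  by rewrite addrC subrK.
- rewrite mulrDl !mulrDr.
  rewrite -(mulrA X) (mulrA (s x)) sxsa pN hXN.
  rewrite -(mulrA X) sxb mulr0 addr0.
  rewrite /V2 -(mulrA (1 - x * a)) (mulrA (1 - s (x * a))) sqa mul0r mulr0 add0r.
  rewrite hb -mulrA omulL // omulR //.
  by rewrite addrC subrK.
Qed.
Arguments fwd {R s a x N N1 N0 X X0 u v b}.


Lemma pow_core (R : pzRingType) (s : R -> R) (a x : R) (k : nat) :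
  is_core_inverse s a x ->
  a ^+ k.+1 * x ^+ k.+1 = a * x /\ x ^+ k.+1 * a ^+ k.+1 = x * a.
Proof.
move=> cx; have [H1 H2 H3 axa xax] := core_basic cx.
elim: k => [|k [IH1 IH2]]; first by rewrite !expr1.
split.
- by rewrite exprS (exprSr x) mulrA -(mulrA a) IH1 -!mulrA H2.
- by rewrite exprS (exprSr a) mulrA -(mulrA x) IH2 -!mulrA H3.
Qed.
Arguments pow_core {R s a x} k.


Theorem theorem2p6 (R : pzRingType) (star : R -> R) (a : R) (n : nat) :
  involution star -> (3 <= n)%N ->
  (core_invertible star a <->
     exists b : R, (forall y, lann a y <-> lprincipal b y) /\
                   invertible (star a * a ^+ n + star b * b))
  /\
  (forall (b x v : R),
     (forall y, lann a y <-> lprincipal b y) ->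
     is_inverse (star a * a ^+ n + star b * b) v ->
     is_core_inverse star a x ->
     x = a ^+ n.-1 * v * star a).
Proof.
move=> inv; case: n => [|[|[|m]]] // _.
have ba_of : forall b, (forall y, lann a y <-> lprincipal b y) -> b * a = 0.
  by move=> b ann; apply/(ann b).2; exists 1; rewrite mul1r.
split; first split.
- move=> [x cx].
  have [hNX _] := pow_core m.+2 cx.
  have [_ hXN] := pow_core m.+2 cx.
  have [ann iv] := fwd (N1 := a ^+ m.+2) (N0 := a ^+ m.+2) (X0 := x ^+ m.+2)
     (u := star a * a ^+ m.+3 + star (1 - a * x) * (1 - a * x))
     (v := x ^+ m.+3 * star x + (1 - x * a) * (1 - star (x * a)))
     inv cx (exprS _ _) (exprSr _ _) (exprS _ _) hNX hXN erefl erefl erefl.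
  by exists (1 - a * x); split => //; exists (x ^+ m.+3 * star x + (1 - x * a) * (1 - star (x * a))).
- move=> [b [ann [v [uv vu]]]].
  exists (a ^+ m.+2 * v * star a).
  apply: (conv (P := a ^+ m) (N := a ^+ m.+3) inv (ba_of b ann) _ _ _ erefl uv vu).
  + by rewrite !exprS.
  + by rewrite exprS.
  + by rewrite -!exprSr.
- move=> b x v ann [uv vu] cx.
  have [hA _] := pow_core m.+1 cx.
  apply: (uniq_core (X0 := x ^+ m.+1) (u := star a * a ^+ m.+3 + star b * b) inv (ba_of b ann) cx hA (exprS _ _) _ vu).
  by rewrite exprS.
Qed.
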